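(* Let $S=\langle n_k\rangle_{k=1}^{3m}$ be an instance of 3-Partition (with $n_1\ge\cdots\ge n_{3m}$) and let $\mathrm{Ver}_S$, $w_S$ be as defined below. If $\langle i_k\rangle_{k=1}^{3m}$ is a permutation (reordering) of $\langle n_k\rangle_{k=1}^{3m}$, then the configuration $\prod_{k=1}^{3m}(a_1b^{i_k}a_2)\,\|\,\mathrm{Ver}_S$ is accepted. Consequently, if $S$ is a ''yes'' instance of 3-Partition, then $\varepsilon\,\|\,w_S\vdash^*\varepsilon\,\|\,\varepsilon$ and $w_S$ is a square.
   Context: Queue automaton: a configuration is written $Q\,\|\,x$ ($Q$ = queue contents, $x$ = remaining input); a step from $Q\,\|\,\sigma x$ ($\sigma$ a symbol) goes either to $Q\sigma\,\|\,x$ (push) or, if $Q=\sigma Q'$, to $Q'\,\|\,x$ (match/pop). $\vdash^*$ is zero or more steps; $\varepsilon$ is the empty string; a configuration $C$ is accepted if $C\vdash^*\varepsilon\,\|\,\varepsilon$. A string $w$ is a square if it is a shuffle of some string $u$ with itself, i.e. there are strings $x_i,y_i$ with $u=x_1\cdots x_k=y_1\cdots y_k$ and $w=x_1y_1\cdots x_ky_k$. An instance of 3-Partition is a sequence $S=\langle n_i:1\le i\le 3m\rangle$ of natural numbers such that $B=(\sum_{i=1}^{3m}n_i)/m$ is an integer and $B/4<n_i<B/2$ for all $i$; it is a ''yes'' instance if it can be partitioned into $m$ disjoint subsequences each having exactly three elements summing to $B$. Throughout, the $n_i$ are assumed to be in non-increasing order. The alphabet is $\{a_1,a_2,b,e_0,e,c_1,c_2,x,y\}$;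 $u^i$ denotes $i$ concatenated copies of $u$ and $\prod_{\ell=1}^k u_\ell=u_1u_2\cdots u_k$. Define $U_\ell=a_1^2b^\ell a_2^2$, $v_\ell=c_1x^\ell y^\ell c_2$, $D_k=U_{n_k}^{3m-k+1}$, $E_k=U_B^{3m-k}\,a_1b^{n_k}a_2\,U_B^{3m-k}$, $F_k=U_B^{2(3m-k)}$, and $\mathrm{Load}_S=e_0\prod_{i=1}^m(b^{2B}e)$, $\mathrm{Dist}_S=e_0\prod_{i=1}^m((a_1b^Ba_2)^3e)$, $\mathrm{Ver}_S=\prod_{k=1}^{3m}[v_{4k-3}D_kv_{4k-3}\,v_{4k-2}D_kv_{4k-2}\,v_{4k-1}E_kv_{4k-1}\,v_{4k}F_kv_{4k}]$, and $w_S=\mathrm{Load}_S\mathrm{Dist}_S\mathrm{Ver}_S$. *)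

(* Defs.v *)
From HB Require Import structures.
From mathcomp Require Import all_boot.
Set Implicit Arguments. Unset Strict Implicit. Unset Printing Implicit Defensive.

Inductive sym := a1 | a2 | b | e0 | e | c1 | c2 | x | y.

Definition sym_code (s : sym) : nat :=
  match s with a1 => 0 | a2 => 1 | b => 2 | e0 => 3 | e => 4
  | c1 => 5 | c2 => 6 | x => 7 | y => 8 end.
Definition sym_decode (n : nat) : option sym :=
  match n with 0 => Some a1 | 1 => Some a2 | 2 => Some b | 3 => Some e0
  | 4 => Some e | 5 => Some c1 | 6 => Some c2 | 7 => Some x | 8 => Some y
  | _ => None end.
Lemma sym_codeK : pcancel sym_code sym_decode. Proof. by case. Qed.
HB.instance Definition _ := Countable.copy sym (pcan_type sym_codeK).

Definition word := seq sym.

(* Configuration Q || w : (queue contents, remaining input). *)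
Definition config := (word * word)%type.

Inductive qstep : config -> config -> Prop :=
| qpush (Q : word) (s : sym) (w : word) : qstep (Q, s :: w) (rcons Q s, w)
| qpop  (Q : word) (s : sym) (w : word) : qstep (s :: Q, s :: w) (Q, w).

Inductive qsteps : config -> config -> Prop :=
| qsteps_refl C : qsteps C C
| qsteps_step C1 C2 C3 : qstep C1 C2 -> qsteps C2 C3 -> qsteps C1 C3.

Definition accepted (C : config) : Prop := qsteps C ([::], [::]).

(* w is a shuffle of some u with itself: u = x_1..x_k = y_1..y_k,
   w = x_1 y_1 ... x_k y_k. *)
Definition is_square (w : word) : Prop :=
  exists (xs ys : seq word),
    size xs = size ys /\ flatten xs = flatten ys /\
    w = flatten [seq p.1 ++ p.2 | p <- zip xs ys].

Definition m_of (S : seq nat) : nat := size S %/ 3.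
Definition B_of (S : seq nat) : nat := sumn S %/ m_of S.

Definition three_partition_instance (S : seq nat) : Prop :=
  [/\ size S = 3 * m_of S, 0 < m_of S, m_of S %| sumn S &
      forall n, n \in S -> B_of S < 4 * n /\ 2 * n < B_of S].

Definition three_partition_yes (S : seq nat) : Prop :=
  exists T : seq (seq nat),
    [/\ size T = m_of S,
        all (fun t => (size t == 3) && (sumn t == B_of S)) T &
        perm_eq (flatten T) S].

Definition pw (u : word) (i : nat) : word := flatten (nseq i u).
Definition bigcat (lo hi : nat) (f : nat -> word) : word :=
  flatten [seq f k | k <- iota lo (hi.+1 - lo)].

Definition U (l : nat) : word := [:: a1; a1] ++ nseq l b ++ [:: a2; a2].
Definition vv (l : nat) : word := c1 :: nseq l x ++ nseq l y ++ [:: c2].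

Section Words.
Variable S : seq nat.
Let m := m_of S.
Let B := B_of S.
(* n_k, k = 1..3m *)
Definition nk (k : nat) : nat := nth 0 S k.-1.

Definition Dk (k : nat) : word := pw (U (nk k)) (3 * m - k + 1).
Definition Ek (k : nat) : word :=
  pw (U B) (3 * m - k) ++ [:: a1] ++ nseq (nk k) b ++ [:: a2] ++ pw (U B) (3 * m - k).
Definition Fk (k : nat) : word := pw (U B) (2 * (3 * m - k)).

Definition Load : word := e0 :: bigcat 1 m (fun _ => nseq (2 * B) b ++ [:: e]).
Definition Dist : word :=
  e0 :: bigcat 1 m (fun _ => pw ([:: a1] ++ nseq B b ++ [:: a2]) 3 ++ [:: e]).
Definition Ver : word :=
  bigcat 1 (3 * m) (fun k =>
    vv (4 * k - 3) ++ Dk k ++ vv (4 * k - 3) ++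
    vv (4 * k - 2) ++ Dk k ++ vv (4 * k - 2) ++
    vv (4 * k - 1) ++ Ek k ++ vv (4 * k - 1) ++
    vv (4 * k) ++ Fk k ++ vv (4 * k)).
Definition wS : word := Load ++ Dist ++ Ver.
End Words.

Definition queue_of (I : seq nat) : word :=
  flatten [seq [:: a1] ++ nseq i b ++ [:: a2] | i <- I].

(* Main.v *)
Require Import Defs.
From mathcomp Require Import all_boot.
From mathcomp Require Import zify.
Set Implicit Arguments. Unset Strict Implicit.

Lemma qsteps_trans C1 C2 C3 : qsteps C1 C2 -> qsteps C2 C3 -> qsteps C1 C3.
Proof. elim=> [//|? ? ? h _ ih] h2; exact: qsteps_step h (ih h2). Qed.

Inductive tr : word -> word -> word -> Prop :=
| tr_nil : tr [::] [::] [::]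
| tr_pop s W P Q : tr W P Q -> tr (s :: W) (s :: P) Q
| tr_push s W P Q : tr W P Q -> tr (s :: W) P (s :: Q).

Lemma tr_run W P Q : tr W P Q -> forall R r, qsteps (P ++ R, W ++ r) (R ++ Q, r).
Proof.
elim=> [R r|s W' P' Q' _ ih R r|s W' P' Q' _ ih R r] /=.
- rewrite cats0; exact: qsteps_refl.
- exact: qsteps_step (qpop _ _ _) (ih R r).
- apply: qsteps_step; first exact: qpush.
  rewrite rcons_cat. have := ih (rcons R s) r. by rewrite cat_rcons.
Qed.

Lemma tr_cat W1 P1 Q1 W2 P2 Q2 : tr W1 P1 Q1 -> tr W2 P2 Q2 ->
  tr (W1 ++ W2) (P1 ++ P2) (Q1 ++ Q2).
Proof. move=> h1 h2; elim: h1 => /= [//|s W P Q _ ih|s W P Q _ ih]; by constructor. Qed.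

Lemma tr_pops W : tr W W [::].
Proof. elim: W => [|s W ih]; by constructor. Qed.

Lemma tr_pushes W : tr W [::] W.
Proof. elim: W => [|s W ih]; by constructor. Qed.

Lemma tr_eq W P Q W' P' Q' : tr W P Q -> W = W' -> P = P' -> Q = Q' -> tr W' P' Q'.
Proof. by move=> h <- <- <-. Qed.

Lemma seg v W Q Q' r : tr W Q Q' -> qsteps (Q, v ++ W ++ v ++ r) (Q', r).
Proof.
move=> h.
eapply qsteps_trans.
  have := tr_run (tr_pushes v) Q (W ++ v ++ r). rewrite /=. exact.
eapply qsteps_trans; first exact: (tr_run h v (v ++ r)).
have := tr_run (tr_pops v) Q' r. by rewrite cats0.
Qed.

Lemma tr_map (T : eqType) (f g h : T -> word) (s : seq T) :
  (forall t, t \in s -> tr (f t) (g t) (h t)) ->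
  tr (flatten (map f s)) (flatten (map g s)) (flatten (map h s)).
Proof.
elim: s => [_|t s ih H] /=; first exact: tr_nil.
apply: tr_cat; first by apply: H; rewrite mem_head.
apply: ih => u hu; apply: H; by rewrite in_cons hu orbT.
Qed.

Lemma pwD u n1 n2 : pw u (n1 + n2) = pw u n1 ++ pw u n2.
Proof. by rewrite /pw nseqD flatten_cat. Qed.

Lemma pw_map (T : Type) u (s : seq T) : pw u (size s) = flatten (map (fun _ => u) s).
Proof. by elim: s => //= ? s <-. Qed.

Definition blk (i : nat) : word := [:: a1] ++ nseq i b ++ [:: a2].

Lemma queue_ofE L : queue_of L = flatten (map blk L).
Proof. by []. Qed.

Lemma queue_of_cat L1 L2 : queue_of (L1 ++ L2) = queue_of L1 ++ queue_of L2.
Proof. by rewrite !queue_ofE map_cat flatten_cat. Qed.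

Lemma tr_comp l i : i <= l -> tr (U l) (blk i) (blk (l - i)).
Proof.
move=> hi.
have E : nseq l b = nseq i b ++ nseq (l - i) b by rewrite -nseqD subnKC.
rewrite /U /blk E /=.
apply: tr_pop; apply: tr_push.
apply: (tr_eq (tr_cat (tr_cat (tr_pops (nseq i b)) (tr_pushes (nseq (l-i) b)))
          (tr_pop a2 (tr_push a2 tr_nil)))) => //.
by rewrite cats0.
Qed.

Lemma tr_D l L : (forall i, i \in L -> i <= l) ->
  tr (pw (U l) (size L)) (queue_of L) (queue_of [seq l - i | i <- L]).
Proof.
move=> H; rewrite pw_map !queue_ofE -map_comp.
apply: (@tr_map _ (fun _ => U l) blk (blk \o (fun i => l - i))).
move=> i /H hi /=; exact: tr_comp.
Qed.

Lemma tr_D' l L : (forall i, i \in L -> i <= l) ->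
  tr (pw (U l) (size L)) (queue_of [seq l - i | i <- L]) (queue_of L).
Proof.
move=> H.
have E : [seq l - i | i <- [seq l - i | i <- L]] = L.
  rewrite -map_comp; apply: map_id_in => i /H /= hi; exact: subKn.
have := @tr_D l [seq l - i | i <- L]; rewrite size_map E; apply.
move=> i /mapP [j _ ->]; exact: leq_subr.
Qed.

Lemma stage (Bv n : nat) (L : seq nat) la lb lc ld D E F r :
  n \in L -> (forall i, i \in L -> i <= n) -> n <= Bv ->
  D = pw (U n) (size L) ->
  E = pw (U Bv) (size L - 1) ++ [:: a1] ++ nseq n b ++ [:: a2] ++ pw (U Bv) (size L - 1) ->
  F = pw (U Bv) (2 * (size L - 1)) ->
  exists L', perm_eq L (n :: L') /\
  qsteps (queue_of L, (vv la ++ D ++ vv la ++ vv lb ++ D ++ vv lb ++ vv lc ++ E ++ vv lc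
     ++ vv ld ++ F ++ vv ld) ++ r) (queue_of L', r).
Proof.
move=> hn hle hB hD hE hF.
rewrite -!catA.
case/splitPr: hn hle hD hE hF => L1 L2 hle hD hE hF.
exists (L1 ++ L2); split.
  by rewrite (perm_catCA L1 [:: n] L2).
have hle1 : forall i, i \in L1 -> i <= Bv.
  by move=> i hi; apply: leq_trans (hle i _) hB; rewrite mem_cat hi.
have hle2 : forall i, i \in L2 -> i <= Bv.
  by move=> i hi; apply: leq_trans (hle i _) hB; rewrite mem_cat in_cons hi !orbT.
set s1 := size L1. set s2 := size L2.
have hs : size (L1 ++ n :: L2) - 1 = s1 + s2.
  by rewrite size_cat /= addnS subn1.
eapply qsteps_trans; first by apply: seg; rewrite hD; exact: (tr_D hle).
eapply qsteps_trans; first by apply: seg; rewrite hD; exact: (tr_D' hle).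
set C1 := [seq Bv - i | i <- L1]. set C2 := [seq Bv - i | i <- L2].
set Q' := queue_of C1 ++ pw (U Bv) s2 ++ queue_of C2 ++ pw (U Bv) s1.
eapply qsteps_trans.
  apply: (@seg _ _ _ Q'). rewrite hE.
  apply: (tr_eq (tr_cat (tr_D hle1) (tr_cat (tr_pushes (pw (U Bv) s2))
           (tr_cat (tr_pops (blk n)) (tr_cat (tr_D hle2) (tr_pushes (pw (U Bv) s1))))))).
  - by rewrite hs {2}(addnC s1 s2) !pwD -!catA.
  - by rewrite /queue_of map_cat flatten_cat /= cats0.
  - by [].
apply: seg. rewrite hF.
apply: (tr_eq (tr_cat (tr_D' hle1) (tr_cat (tr_pops (pw (U Bv) s2))
           (tr_cat (tr_D' hle2) (tr_pops (pw (U Bv) s1)))))).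
- by rewrite hs -!pwD; congr pw; lia.
- by [].
- by rewrite /queue_of map_cat flatten_cat /= cats0.
Qed.

Lemma geq_trans : transitive geq.
Proof. move=> v u w h1 h2; exact: leq_trans h2 h1. Qed.

Definition fV S k := vv (4 * k - 3) ++ Dk S k ++ vv (4 * k - 3) ++ vv (4 * k - 2) ++
   Dk S k ++ vv (4 * k - 2) ++ vv (4 * k - 1) ++ Ek S k ++ vv (4 * k - 1) ++
   vv (4 * k) ++ Fk S k ++ vv (4 * k).

Lemma VerE S : Ver S = bigcat 1 (3 * m_of S) (fV S).
Proof. by []. Qed.

Lemma ver_iter S : three_partition_instance S -> sorted geq S ->
  forall c k L, k + c = 3 * m_of S + 1 -> 0 < k -> perm_eq L (drop k.-1 S) ->
  accepted (queue_of L, flatten [seq fV S j | j <- iota k c]).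
Proof.
case=> hsz hm _ hin hsort.
elim=> [|c ih] k L hk hk1 hL.
  have : drop k.-1 S = [::] by apply: drop_oversize; lia.
  move=> E; rewrite E in hL; have := perm_size hL => /= /size0nil ->.
  exact: qsteps_refl.
change (accepted (queue_of L, fV S k ++ flatten [seq fV S j | j <- iota k.+1 c])).
have hks : k.-1 < size S by lia.
have hd := drop_nth 0 hks. rewrite prednK // in hd.
set n := nth 0 S k.-1 in hd.
have hnS : n \in S by apply: mem_nth.
have hsd : sorted geq (drop k.-1 S) by apply: subseq_sorted (drop_subseq _ _) hsort; exact: geq_trans.
rewrite hd /= in hsd.
have hall := order_path_min geq_trans hsd.
have hszL : size L = 3 * m_of S - k + 1.
  rewrite (perm_size hL) size_drop hsz; lia.
have p1 : n \in L by rewrite (perm_mem hL) hd mem_head.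
have p2 : forall i, i \in L -> i <= n.
  move=> i; rewrite (perm_mem hL) hd in_cons => /orP [/eqP -> //|hi].
  by have := allP hall i hi.
have p3 : n <= B_of S by have := hin n hnS; lia.
have p4 : Dk S k = pw (U n) (size L) by rewrite hszL.
have p5 : Ek S k = pw (U (B_of S)) (size L - 1) ++ [:: a1] ++ nseq n b ++ [:: a2] ++ pw (U (B_of S)) (size L - 1).
  by rewrite /Ek hszL addnK.
have p6 : Fk S k = pw (U (B_of S)) (2 * (size L - 1)) by rewrite /Fk hszL addnK.
have [L' [hp hq]] := @stage (B_of S) n L (4 * k - 3) (4 * k - 2) (4 * k - 1) (4 * k)
   (Dk S k) (Ek S k) (Fk S k) (flatten [seq fV S j | j <- iota k.+1 c]) p1 p2 p3 p4 p5 p6.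
apply: qsteps_trans hq _.
apply: ih; first lia; first by [].
have : perm_eq (n :: L') (n :: drop k S) by rewrite -hd; rewrite perm_sym in hp; exact: perm_trans hp hL.
by rewrite perm_cons.
Qed.

Lemma part1 S : three_partition_instance S -> sorted geq S ->
  forall I : seq nat, perm_eq I S -> accepted (queue_of I, Ver S).
Proof.
move=> h hs I hI; rewrite VerE /bigcat.
apply: (ver_iter h hs) => //; first by rewrite subn1 /= add1n addn1.
by rewrite drop0.
Qed.

Lemma square_gen C : qsteps C ([::], [::]) -> exists xs ys : seq word,
  [/\ size xs = size ys, C.1 ++ flatten xs = flatten ys &
      C.2 = flatten [seq p.1 ++ p.2 | p <- zip xs ys]].
Proof.
move eC: ([::], [::]) => C0 h; elim: h eC => [C4 <-|C1 C2 C3 hs _ ih /ih].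
  by exists [::], [::].
case=> xs [ys [hsz hq hw]].
case: hs hq hw => Q s w hq hw /=.
- exists ([:: s] :: xs), ([::] :: ys); split => /=; first by rewrite hsz.
    by rewrite -hq -cat_rcons.
  by rewrite -hw.
- exists ([::] :: xs), ([:: s] :: ys); split => /=; first by rewrite hsz.
    by rewrite hq.
  by rewrite -hw.
Qed.

Lemma tr_blkB Bv p : p <= Bv ->
  tr ([:: a1] ++ nseq Bv b ++ [:: a2]) (nseq (Bv - p) b) (blk p).
Proof.
move=> hp.
have E : nseq Bv b = nseq (Bv - p) b ++ nseq p b by rewrite -nseqD subnK.
rewrite E /blk /=; apply: tr_push.
apply: (tr_eq (tr_cat (tr_cat (tr_pops (nseq (Bv - p) b)) (tr_pushes (nseq p b)))
          (tr_push a2 tr_nil))) => //.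
by rewrite !cats0.
Qed.

Lemma tr_triple (Bv : nat) (t : seq nat) : (size t == 3) && (sumn t == Bv) ->
  tr (pw ([:: a1] ++ nseq Bv b ++ [:: a2]) 3 ++ [:: e]) (nseq (2 * Bv) b ++ [:: e]) (queue_of t).
Proof.
case: t => [|p [|q [|r [|]]]] //= /eqP hs.
apply: (tr_eq (tr_cat (tr_blkB (_ : p <= Bv)) (tr_cat (tr_blkB (_ : q <= Bv))
          (tr_cat (tr_blkB (_ : r <= Bv)) (tr_pops [:: e]))))); try lia.
- by rewrite /pw /= -!catA /= -!catA /= -!catA /=.
- by rewrite catA catA -nseqD -nseqD; congr (nseq _ _ ++ _); lia.
- by rewrite /queue_of /= cats0.
Qed.

Lemma map_cst (T1 T2 : Type) (c : word) (s1 : seq T1) (s2 : seq T2) :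
  size s1 = size s2 -> map (fun _ => c) s1 = map (fun _ => c) s2.
Proof. by elim: s1 s2 => [|? s1 ih] [|? s2] //= [/ih ->]. Qed.

Lemma queue_of_flatten T : queue_of (flatten T) = flatten (map queue_of T).
Proof. by elim: T => //= t T ih; rewrite queue_of_cat ih. Qed.

Lemma part2 S : three_partition_instance S -> sorted geq S ->
  three_partition_yes S -> accepted ([::], wS S) /\ is_square (wS S).
Proof.
move=> h hs [T [hT hall hperm]].
have hDist : tr (Dist S) (Defs.Load S) (queue_of (flatten T)).
  rewrite /Dist /Load /bigcat /=; apply: tr_pop.
  rewrite (@map_cst _ _ _ (iota _ _) T); last by rewrite size_iota hT subn1.
  rewrite (@map_cst _ _ (nseq (2 * B_of S) b ++ [:: e]) (iota _ _) T); last by rewrite size_iota hT subn1.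
  rewrite queue_of_flatten; apply: tr_map => t ht.
  exact: tr_triple (allP hall t ht).
have h1 := tr_run (tr_pushes (Defs.Load S)) [::] (Dist S ++ Ver S).
have h2 := tr_run hDist [::] (Ver S).
rewrite cats0 /= in h2. rewrite /= in h1.
have acc : accepted ([::], wS S).
  apply: qsteps_trans h1 _; apply: qsteps_trans h2 _.
  exact: part1 h hs _ hperm.
split => //.
have [xs [ys [hsz hq hw]]] := square_gen acc.
by exists xs, ys.
Qed.

Theorem lemma5 (S : seq nat) :
  three_partition_instance S ->
  sorted geq S ->
  (forall I : seq nat, perm_eq I S -> accepted (queue_of I, Ver S)) /\
  (three_partition_yes S -> accepted ([::], wS S) /\ is_square (wS S)).
Proof.
move=> h hs; split; [exact: part1 | exact: part2].
Qed.
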